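(* Let $(M,d)$ be a bounded metric space such that the family $\mathcal{A}(M)$ of admissible subsets of $M$ is compact and has normal structure, and let $T: M\to M$ be a mapping which diminishes the radius of invariant admissible subsets of $M$. Then $T$ has a fixed point in $M$.
   Context: For $x\in M$ and $K\subseteq M$: $r_x(K)=\sup\{d(x,y):y\in K\}$, $r(K)=\inf\{r_x(K):x\in K\}$, $\delta(K)=\sup\{d(x,y):x,y\in K\}$. A bounded subset $K\subseteq M$ is admissible if it equals the intersection of all closed balls of $M$ containing it; $\mathcal{A}(M)$ denotes the family of admissible subsets. $\mathcal{A}(M)$ is compact if every descending chain of nonempty elements of $\mathcal{A}(M)$ has nonempty intersection. $\mathcal{A}(M)$ has normal structure if $r(K)<\delta(K)$ for every $K\in\mathcal{A}(M)$ with $\delta(K)>0$. $T$ diminishes the radius of invariant admissible subsets if for every $A\in\mathcal{A}(M)$ with $T(A)\subseteq A$, $r_{Tx}(T(A))\le r_x(A)$ for every $x\in M$. *)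

(* Defs.v *)
From HB Require Import structures.
From mathcomp Require Import all_boot all_order all_algebra.
From mathcomp Require Import boolp classical_sets reals.
Set Implicit Arguments. Unset Strict Implicit. Unset Printing Implicit Defensive.
Import Order.TTheory GRing.Theory Num.Theory.
Local Open Scope classical_set_scope.
Local Open Scope ring_scope.

Section MetricDefs.
Variables (R : realType) (M : Type) (d : M -> M -> R).

Definition is_metric : Prop :=
  [/\ forall x y, 0 <= d x y,
      forall x y, d x y = 0 <-> x = y,
      forall x y, d x y = d y x &
      forall x y z, d x z <= d x y + d y z].

Definition bounded_space : Prop := exists B : R, forall x y, d x y <= B.

Definition bounded_subset (K : set M) : Prop :=
  exists B : R, forall x y, K x -> K y -> d x y <= B.

Definition cball (x : M) (r : R) : set M := [set y | d x y <= r].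

Definition is_cball (B : set M) : Prop :=
  exists x r, 0 <= r /\ B = cball x r.

Definition rad_at (x : M) (K : set M) : R := sup [set d x y | y in K].

Definition chebyshev_radius (K : set M) : R := inf [set rad_at x K | x in K].

Definition diam (K : set M) : R :=
  sup [set d p.1 p.2 | p in [set p : M * M | K p.1 /\ K p.2]].

Definition admissible (K : set M) : Prop :=
  bounded_subset K /\
  K = \bigcap_(B in [set B | is_cball B /\ K `<=` B]) B.

Definition admissible_compact : Prop :=
  forall F : set (set M),
    F !=set0 ->
    (forall K, F K -> admissible K /\ K !=set0) ->
    (forall K L, F K -> F L -> K `<=` L \/ L `<=` K) ->
    \bigcap_(K in F) K !=set0.

Definition admissible_normal : Prop :=
  forall K, admissible K -> 0 < diam K -> chebyshev_radius K < diam K.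

Definition diminishes_radius (T : M -> M) : Prop :=
  forall A, admissible A -> T @` A `<=` A ->
    forall x, rad_at (T x) (T @` A) <= rad_at x A.

End MetricDefs.

(* Main.v *)
Require Import Defs.
From mathcomp Require Import all_boot all_order all_algebra.
From mathcomp Require Import boolp classical_sets reals.
Import Order.TTheory GRing.Theory Num.Theory.
Local Open Scope classical_set_scope.
Local Open Scope ring_scope.

Lemma cball_adm (R : realType) (M : Type) (d : M -> M -> R) (x : M) (r : R) :
  is_metric d -> 0 <= r -> admissible d (cball d x r).
Proof.
move=> [d0 dE dC dT] r0; split.
  exists (r + r) => y z /= hy hz.
  apply: le_trans (dT y x z) _; rewrite dC; exact: lerD.
apply/seteqP; split=> y.
  by move=> hy B [_ HB]; exact: HB.
by move=> /(_ (cball d x r)); apply; split=> //; exists x, r.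
Qed.

Lemma bigcap_adm (R : realType) (M : Type) (d : M -> M -> R) (F : set (set M)) :
  F !=set0 -> (forall K, F K -> admissible d K) ->
  admissible d (\bigcap_(K in F) K).
Proof.
move=> [K0 FK0] hF; split.
  have [[B hB] _] := hF K0 FK0.
  by exists B => x y hx hy; apply: hB; [exact: hx|exact: hy].
apply/seteqP; split=> y.
  by move=> hy B [_ HB]; exact: HB.
move=> hy K FK; have [_ ->] := hF K FK.
move=> B [cB KB]; apply: hy; split=> // z hz; apply: KB; exact: hz.
Qed.
Theorem theorem2p2 (R : realType) (M : Type) (d : M -> M -> R) (T : M -> M) :
  is_metric d -> (exists x0 : M, True) -> bounded_space d ->
  admissible_compact d -> admissible_normal d -> diminishes_radius d T ->
  exists x : M, T x = x.
Proof.
move=> met [x0 _] [B hB] comp norm dim.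
have met' := met; case: met' => [d0 dE dC dT].
have B0 : 0 <= B by apply: le_trans (d0 x0 x0) (hB x0 x0).
have setT_ball : [set: M] = cball d x0 B.
  by apply/seteqP; split=> y // _; exact: hB.
pose P (K : set M) := [/\ admissible d K, K !=set0 & T @` K `<=` K].
have PT : P setT.
  split; [by rewrite setT_ball; exact: cball_adm| by exists x0 |by []].
pose Rel (A C : {K : set M | P K}) := `[< sval C `<=` sval A >].
have [[Km PKm] Kmin] : exists t, premaximal (fun x y => Rel x y) t.
  apply: (@ZL_preorder _ (exist _ setT PT)).
  - by move=> t; apply/asboolP.
  - by move=> a b c /asboolP h1 /asboolP h2; apply/asboolP; exact: subset_trans h2 h1.
  move=> A Atot.
  have [[a0 Aa0]|A0] := pselect (A !=set0); last first.
    by exists (exist _ setT PT) => s As; exfalso; apply: A0; exists s.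
  pose F := [set sval a | a in A].
  have FP : forall K, F K -> P K by move=> _ [a _ <-]; exact: (svalP a).
  have F0 : F !=set0 by exists (sval a0); exists a0.
  have PI : P (\bigcap_(K in F) K).
    split.
    - by apply: bigcap_adm => // K /FP [].
    - apply: comp => //.
      + by move=> K /FP [].
      + move=> _ _ [a Aa <-] [b Ab <-].
        by have [/asboolP h|/asboolP h] := Atot a b Aa Ab; [right|left].
    - move=> _ [z hz <-] K FK; have [_ _ TK] := FP K FK.
      by apply: TK; exists z => //; exact: hz.
  exists (exist _ _ PI) => s As; apply/asboolP => /= z hz.
  by apply: hz; exists s.
have [Kadm [k0 Kk0] TKm] := PKm.
have minK : forall L, P L -> L `<=` Km -> Km `<=` L.
  move=> L PL LK.
  have := Kmin (exist _ L PL); rewrite /Rel /=.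
  by move=> /(_ (asboolT LK)) /asboolP.
have radge : forall x (S : set M) y, S y -> d x y <= rad_at d x S.
  move=> x S y Sy; apply: ub_le_sup; last by exists y.
  by exists B => _ [w _ <-]; exact: hB.
have radle : forall x (S : set M) s, S !=set0 ->
    (forall y, S y -> d x y <= s) -> rad_at d x S <= s.
  move=> x S s [y0 Sy0] hs; apply: ge_sup; first by exists (d x y0), y0.
  by move=> _ [w Sw <-]; exact: hs.
pose r := chebyshev_radius d Km.
have r0 : 0 <= r.
  apply: lb_le_inf; first by exists (rad_at d k0 Km), k0.
  move=> _ [x Kx <-]; apply: le_trans (d0 x k0) _; exact: radge.
pose Cs s := Km `&` [set x | forall y, Km y -> d x y <= s].
have Csadm : forall s, 0 <= s -> admissible d (Cs s).
  move=> s s0.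
  pose Fs := [set L | L = Km \/ exists2 y, Km y & L = cball d y s].
  have -> : Cs s = \bigcap_(L in Fs) L.
    apply/seteqP; split=> x.
      move=> [Kx hx] L [->|[y Ky ->]] //; rewrite /cball /= dC; exact: hx.
    move=> hx; split; first by apply: hx; left.
    move=> y Ky; rewrite dC; apply: (hx (cball d y s)); right; exists y => //.
  apply: bigcap_adm; first by exists Km; left.
  by move=> L [->|[y Ky ->]] //; exact: cball_adm.
pose Cv := \bigcap_(Bl in [set Bl | is_cball d Bl /\ T @` Km `<=` Bl]) Bl.
have CvK : Cv `<=` Km.
  move=> z hz; have KE := Kadm.2; rewrite KE => Bl [cb KB]; apply: hz; split=> //.
  by move=> w /TKm; exact: KB.
have KCv : Km `<=` Cv.
  apply: minK => //; split.
  - apply: bigcap_adm.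
      exists (cball d x0 B); split; first by exists x0, B.
      by move=> w _; exact: hB.
    by move=> _ [[x [rr [rr0 ->]]] _]; exact: cball_adm.
  - exists (T k0) => Bl [_ hBl]; apply: hBl; by exists k0.
  - move=> _ [z hz <-] Bl [_ hBl]; apply: hBl; exists z => //; exact: CvK.
pose G := [set Cs s | s in [set s | r < s]].
have [xc hxc] : \bigcap_(K in G) K !=set0.
  apply: comp.
  - by exists (Cs (r + 1)), (r + 1) => //=; rewrite ltrDl.
  - move=> _ [s /= rs <-]; split; first by apply: Csadm; exact: le_trans r0 (ltW rs).
    have [_ [x Kx <-] lt] : exists2 y, [set rad_at d x Km | x in Km] y & y < s.
      by apply: inf_lt => //; exists (rad_at d k0 Km), k0.
    exists x; split=> // y Ky; apply: le_trans (ltW lt); exact: radge.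
  - move=> _ _ [s _ <-] [t _ <-].
    have /orP [st|ts] := le_total s t.
      by left=> x [Kx hx]; split=> // y Ky; exact: le_trans (hx y Ky) st.
    by right=> x [Kx hx]; split=> // y Ky; exact: le_trans (hx y Ky) ts.
have Cxc : Cs r xc.
  split.
    have [] := hxc (Cs (r + 1)); first by exists (r + 1) => //=; rewrite ltrDl.
    by [].
  move=> y Ky; apply/ler_addgt0Pr => e e0.
  have hG : G (Cs (r + e)) by exists (r + e) => //=; rewrite ltrDl.
  by have [_ ] := hxc _ hG; apply.
have PC : P (Cs r).
  split; [exact: Csadm | by exists xc |].
  move=> _ [z [Kz hz] <-]; split; first by apply: TKm; exists z.
  move=> y Ky; apply: (KCv y Ky (cball d (T z) r)); split; first by exists (T z), r.
  move=> _ [u Ku <-] /=.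
  apply: le_trans (radge (T z) (T @` Km) (T u) _) _; first by exists u.
  apply: le_trans (dim Km Kadm TKm z) _.
  by apply: radle => //; exists k0.
have hall : forall x y, Km x -> Km y -> d x y <= r.
  by move=> x y Kx Ky; have [_ ] := minK _ PC (fun w (hw : Cs r w) => hw.1) x Kx; apply.
have diamr : diam d Km <= r.
  apply: ge_sup; first by exists (d k0 k0), (k0, k0).
  by move=> _ [[p q] [Kp Kq] <-]; exact: hall.
have diam0 : diam d Km <= 0.
  rewrite leNgt; apply/negP => h.
  by have := lt_le_trans (norm Km Kadm h) diamr; rewrite ltxx.
have TKk0 : Km (T k0) by apply: TKm; exists k0.
have : d k0 (T k0) <= diam d Km.
  apply: ub_le_sup; last by exists (k0, T k0).
  by exists B => _ [[p q] _ <-]; exact: hB.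
move=> h; exists k0; apply/esym/dE; apply/eqP; rewrite eq_le d0 andbT.
exact: le_trans h diam0.
Qed.
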